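(* There is a deterministic Congested Clique algorithm which, on an input graph $G$ with arboricity $a\ge 2$, terminates within $O(a)$ rounds with every vertex knowing the entire edge set of $G$. Consequently, every problem whose solution is a computable function of the (unweighted) input graph $G$ can be solved deterministically in $O(a)$ rounds in the Congested Clique, with each vertex outputting its part of a common solution.
   Context: Congested Clique model: there are $n$ processors (vertices) with distinct IDs of $O(\log n)$ bits; computation proceeds in synchronous rounds; in each round every pair of vertices may exchange a message of $O(\log n)$ bits; local computation is unrestricted. The input is a graph $G=(V,E')$ on the same vertex set; each vertex initially knows its incident edges in $G$, and $a$ is known to all vertices. The arboricity of a graph is the minimum number of forests whose union covers its edge set. *)

(* Defs.v *)
From mathcomp Require Import all_boot.

Set Implicit Arguments. Unset Strict Implicit. Unset Printing Implicit Defensive.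

Definition simple_graph n (E : rel 'I_n) : Prop :=
  (forall u v, E u v = E v u) /\ (forall v, E v v = false).

Definition forest n (F : rel 'I_n) : Prop :=
  (forall u v, F u v = F v u) /\
  forall c : seq 'I_n, uniq c -> 2 < size c -> ~~ cycle F c.

Definition covered_by_forests n (E : rel 'I_n) (k : nat) : Prop :=
  exists F : 'I_k -> rel 'I_n,
    (forall i, forest (F i)) /\
    (forall i u v, F i u v -> E u v) /\
    (forall u v, E u v -> exists i, F i u v).

Definition arboricity n (E : rel 'I_n) (a : nat) : Prop :=
  covered_by_forests E a /\ (forall k, covered_by_forests E k -> a <= k).

(* A deterministic Congested Clique algorithm, for each number of vertices n
   and each (globally known) value a: a local state type, an initial state
   computed from the vertex's own ID and its incident edges (neighbour set),
   a message function (message from the vertex in state s to vertex w, a bit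
   string), and a state update from the messages received from all vertices
   (indexed by sender ID).  Local computation is unrestricted. *)
Record CCAlgo := {
  st   : nat -> nat -> Type;
  init : forall n a, 'I_n -> {set 'I_n} -> st n a;
  msg  : forall n a, 'I_n -> st n a -> 'I_n -> seq bool;
  upd  : forall n a, 'I_n -> st n a -> ('I_n -> seq bool) -> st n a
}.

(* Messages have O(log n) bits: at most B * (floor(log2 n) + 1) bits. *)
Definition msg_bounded (A : CCAlgo) (B : nat) : Prop :=
  forall n a (v : 'I_n) (s : st A n a) (w : 'I_n),
    size (@msg A n a v s w) <= B * (trunc_log 2 n).+1.

Fixpoint run (A : CCAlgo) n (E : rel 'I_n) (a : nat) (t : nat) : 'I_n -> st A n a :=
  match t with
  | 0 => fun v => @init A n a v [set u | E v u]
  | t'.+1 =>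
      let s := run A E a t' in
      fun v => @upd A n a v (s v) (fun u => @msg A n a u (s u) v)
  end.

(* Main.v *)
Require Import Defs.
From mathcomp Require Import all_boot.
From mathcomp Require Import zify.
From Stdlib Require Import FunctionalExtensionality.
Set Implicit Arguments. Unset Strict Implicit. Unset Printing Implicit Defensive.

Section Forest.
Variables (n : nat) (F : rel 'I_n).
Hypothesis Fsym : forall u v, F u v = F v u.
Hypothesis Facyc : forall c : seq 'I_n, uniq c -> 2 < size c -> ~~ cycle F c.

Definition g (u w : 'I_n) : nat := (w != u) && F u w.

Lemma gsym u w : g u w = g w u.
Proof. by rewrite /g eq_sym Fsym. Qed.

Section Walk.
Variable S : {set 'I_n}.
Hypothesis Hdeg : forall x, x \in S -> 1 < \sum_(w in S) g x w.

Lemma other x p : x \in S -> exists w, [&& w \in S, w != x, w != p & F x w].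
Proof.
move=> xS; apply/existsP; apply: contraLR (Hdeg xS); rewrite negb_exists => /forallP H.
rewrite -leqNgt.
apply: (@leq_trans (\sum_(w in S) (w == p))).
  apply: leq_sum => w wS; move: (H w); rewrite wS /g /=.
  case: (w =P x) => //= _; case: (w =P p) => //= _; by case: (F x w).
rewrite (big_mkcond (fun w => w \in S)) /=.
rewrite (bigD1 p) //= big1 ?addn0; first by rewrite eqxx; case: (p \in S).
by move=> w /negbTE ->; case: (w \in S).
Qed.

Definition nxt (p c : 'I_n) : 'I_n :=
  odflt c [pick w | [&& w \in S, w != c, w != p & F c w]].

Lemma nxtP p c : c \in S -> let w := nxt p c in [&& w \in S, w != c, w != p & F c w].
Proof.
move=> cS /=; rewrite /nxt; case: pickP => [w Hw //|H].
by have [w Hw] := other p cS; move: (H w); rewrite Hw.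
Qed.

Variable x0 : 'I_n.
Hypothesis x0S : x0 \in S.

Definition stp (pc : 'I_n * 'I_n) := (pc.2, nxt pc.1 pc.2).
Definition pz k := iter k stp (x0, x0).
Definition z k := (pz k).2.

Lemma zS k : z k \in S.
Proof.
elim: k => [|k IH] //=; rewrite /z /= -/(pz k).
by have /and4P[] := nxtP (pz k).1 IH.
Qed.

Lemma pz1 k : (pz k.+1).1 = z k.
Proof. by []. Qed.

Lemma zF k : F (z k) (z k.+1).
Proof. by have /and4P[] := nxtP (pz k).1 (zS k). Qed.

Lemma zne1 k : z k.+1 != z k.
Proof. by have /and4P[] := nxtP (pz k).1 (zS k). Qed.

Lemma zne2 k : z k.+2 != z k.
Proof. by have /and4P[] := nxtP (pz k.+1).1 (zS k.+1); rewrite pz1. Qed.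

Lemma zpath i m : path F (z i) [seq z l | l <- iota i.+1 m].
Proof.
elim: m i => [|m IH] i //=; by rewrite zF IH.
Qed.

Lemma contra_false : False.
Proof.
have ex : exists j, [exists i : 'I_j, z i == z j].
  case: (boolP [exists j : 'I_n.+1, [exists i : 'I_j, z i == z j]]).
    by move=> /existsP [j Hj]; exists j.
  rewrite negb_exists => /forallP H.
  have D : forall l l' : 'I_n.+1, l < l' -> z l != z l'.
    move=> l l' ll'; move: (H l'); rewrite negb_exists => /forallP /(_ (Ordinal ll')).
    by [].
  have inj : injective (fun l : 'I_n.+1 => z l).
    move=> l l' /eqP e; case: (ltngtP l l') => [ll'|ll'|/val_inj //].
      by move: (D _ _ ll'); rewrite e.
    by move: (D _ _ ll'); rewrite eq_sym e.
  by move: (leq_card _ inj); rewrite !card_ord ltnn.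
destruct (ex_minnP ex) as [j Pj minj]; move: Pj => /existsP [i /eqP zij].
have D : forall l l', l < l' < j -> z l != z l'.
  move=> l l' /andP [ll' l'j]; apply/negP => /eqP e.
  have : [exists i : 'I_l', z i == z l'] by apply/existsP; exists (Ordinal ll'); rewrite e.
  by move/minj; rewrite leqNgt l'j.
have ij : i < j := ltn_ord i.
set c := [seq z l | l <- iota i (j - i)].
have uc : uniq c.
  rewrite map_inj_in_uniq ?iota_uniq // => l l'; rewrite !mem_iota => /andP [_ l1] /andP [_ l2] e.
  have lj : l < j by lia.
  have l'j : l' < j by lia.
  case: (ltngtP l l') => [h|h|//].
    by move: (D l l'); rewrite h l'j e eqxx => /(_ isT).
  by move: (D l' l); rewrite h lj e eqxx => /(_ isT).
have sc : 2 < size c.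
  rewrite size_map size_iota.
  case E1: (j - i) => [|[|[|m]]] //.
  - lia.
  - have e : z j = z i.+1 by congr z; lia.
    by move: (zne1 i); rewrite -e -zij eqxx.
  - have e : z j = z i.+2 by congr z; lia.
    by move: (zne2 i); rewrite -e -zij eqxx.
apply: (negP (Facyc uc sc)).
have -> : c = z i :: [seq z l | l <- iota i.+1 (j - i).-1].
  rewrite /c; case E1: (j - i) => [|m]; first lia.
  by [].
rewrite /= -cats1.
have -> : [:: z i] = [seq z l | l <- [:: i.+1 + (j - i).-1]].
  by rewrite /= zij; congr [:: z _]; lia.
rewrite -map_cat (_ : [:: i.+1 + (j - i).-1] = iota (i.+1 + (j - i).-1) 1) // -iotaD; exact: zpath.
Qed.

End Walk.

Lemma leaf (S : {set 'I_n}) x0 : x0 \in S -> exists2 x, x \in S & \sum_(w in S) g x w <= 1.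
Proof.
move=> x0S.
case: (boolP [exists x in S, \sum_(w in S) g x w <= 1]).
  by move=> /exists_inP [x xS H]; exists x.
rewrite negb_exists_in => /forall_inP H.
exfalso; apply: (contra_false _ x0S) => x /H; by rewrite -ltnNge.
Qed.

Definition eS (S : {set 'I_n}) := \sum_(u in S) \sum_(w in S) g u w.

Lemma eS_bound k (S : {set 'I_n}) : #|S| = k -> eS S <= 2 * k.
Proof.
elim: k S => [|k IH] S cS.
  by move/cards0_eq: cS => ->; rewrite /eS big_set0.
have [x0 x0S] : exists x, x \in S.
  by apply/set0Pn; apply/negP => /eqP e; move: cS; rewrite e cards0.
have [x xS lx] := leaf x0S.
have cS' : #|S :\ x| = k by move: cS; rewrite (cardsD1 x) xS add1n => [[]].
have IH' := IH _ cS'.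
rewrite /eS (big_setD1 _ xS) /=.
have -> : \sum_(u in S :\ x) \sum_(w in S) g u w =
          \sum_(u in S :\ x) (g u x + \sum_(w in S :\ x) g u w).
  by apply: eq_bigr => u _; rewrite (big_setD1 _ xS).
rewrite big_split /=.
have h2 : \sum_(u in S :\ x) g u x <= 1.
  apply: leq_trans lx.
  rewrite [X in _ <= X](big_setD1 _ xS) /=.
  apply: leq_trans (leq_addl _ _).
  by rewrite leq_eqVlt; apply/orP; left; apply/eqP; apply: eq_bigr => u _; rewrite gsym.
rewrite /eS in IH'.
have := leq_add (leq_add lx h2) IH'.
by rewrite addnA mulnS.
Qed.
End Forest.

Lemma edges_bound n (E : rel 'I_n) a : (forall v, E v v = false) ->
  covered_by_forests E a -> \sum_(u : 'I_n) #|[set w | E u w]| <= 2 * a * n.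
Proof.
move=> irr [Fs [Ffor [Fsub Fcov]]].
apply: (@leq_trans (\sum_(u : 'I_n) \sum_(w : 'I_n) \sum_(i < a) g (Fs i) u w)).
  apply: leq_sum => u _; rewrite -sum1_card big_mkcond /=; apply: leq_sum => w _.
  rewrite inE; case Euw: (E u w) => //.
  have [i Fi] := Fcov _ _ Euw.
  rewrite (bigD1 i) //= /g Fi andbT.
  have -> : w != u by apply/eqP => e; move: Euw; rewrite e irr.
  by [].
rewrite (exchange_big) /=.
apply: (@leq_trans (\sum_(w : 'I_n) \sum_(i < a) \sum_(u : 'I_n) g (Fs i) u w)).
  by apply: leq_sum => w _; rewrite exchange_big.
rewrite exchange_big /=.
apply: (@leq_trans (\sum_(i < a) 2 * n)); last by rewrite sum_nat_const card_ord; lia.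
apply: leq_sum => i _.
have [Fsym Facyc] := Ffor i.
have := eS_bound Fsym Facyc (S := [set: 'I_n]) (erefl _).
have setT_sum : forall f : 'I_n -> nat, \sum_(u in [set: 'I_n]) f u = \sum_u f u.
  by move=> f; apply: eq_bigl => x; rewrite in_setT.
rewrite cardsT card_ord /eS setT_sum.
under eq_bigr do rewrite setT_sum.
by rewrite exchange_big.
Qed.


Definition Lb n := (trunc_log 2 n).+1.

Fixpoint enc (l k : nat) : seq bool :=
  match l with 0 => [::] | l'.+1 => odd k :: enc l' k./2 end.
Fixpoint dec (s : seq bool) : nat :=
  match s with [::] => 0 | b :: s' => b + (dec s').*2 end.

Lemma size_enc l k : size (enc l k) = l.
Proof. by elim: l k => //= l IH k; rewrite IH. Qed.

Lemma dec_enc l k : k < 2 ^ l -> dec (enc l k) = k.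
Proof.
elim: l k => [|l IH] k /=; first by case: k.
move=> hk; rewrite IH; first by rewrite odd_double_half.
by rewrite -ltn_double -!muln2; move: hk; rewrite expnS; lia.
Qed.

Lemma ltn_Lb n : n < 2 ^ Lb n.
Proof. exact: trunc_log_ltn. Qed.

Record cst (n : nat) := CSt { me : 'I_n; nb : {set 'I_n}; tm : nat;
  dg : 'I_n -> nat; hd : 'I_n -> option 'I_n; kn : rel 'I_n }.

Definition pre n (d : 'I_n -> nat) (v : 'I_n) := \sum_(u : 'I_n | u < v) d u.
Definition owner n (d : 'I_n -> nat) k : option 'I_n :=
  [pick v : 'I_n | (pre d v <= k) && (k < pre d v + d v)].
Definition slot n (d : 'I_n -> nat) (v r : 'I_n) : option 'I_n :=
  [pick i : 'I_n | (i < d v) && ((pre d v + i) %% n == r)].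
Definition dord n (s : seq bool) : option 'I_n := insub (dec s).
Definition decp n (s : seq bool) : option ('I_n * 'I_n) :=
  if s is [::] then None else
  match dord n (take (Lb n) s), dord n (drop (Lb n) s) with
  | Some x, Some y => Some (x, y) | _, _ => None end.

Definition msgf n (a : nat) (v : 'I_n) (s : cst n) (w : 'I_n) : seq bool :=
  match tm s with
  | 0 => enc (Lb n) #|nb s|
  | 1 => match slot (dg s) v w with
         | Some i => enc (Lb n) (nth v (enum (nb s)) i) | None => [::] end
  | t.+2 => match owner (dg s) (v + t * n) with
            | Some o => match hd s o with
                        | Some x => enc (Lb n) o ++ enc (Lb n) x
                        | None => [::] end
            | None => [::] end
  end.

Definition updf n (a : nat) (v : 'I_n) (s : cst n) (m : 'I_n -> seq bool) : cst n :=
  match tm s with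
  | 0 => CSt (me s) (nb s) 1 (fun u => dec (m u)) (hd s) (kn s)
  | 1 => CSt (me s) (nb s) 2 (dg s)
           (fun u => if m u is [::] then None else dord n (m u)) (kn s)
  | t.+2 => CSt (me s) (nb s) t.+3 (dg s) (hd s)
           (fun x y => kn s x y || [exists u, decp n (m u) == Some (x, y)])
  end.

Definition Alg : CCAlgo :=
  {| st := fun n _ => cst n;
     init := fun n a v N => CSt v N 0 (fun _ => 0) (fun _ => None) (fun _ _ => false);
     msg := msgf; upd := updf |}.

Lemma Alg_bounded : msg_bounded Alg 2.
Proof.
move=> n a v s w /=; rewrite /msgf.
case: (tm s) => [|[|t]]; rewrite ?size_enc ?mul2n -?addnn ?leq_addr //.
  by case: slot => [i|]; rewrite ?size_enc ?leq_addr.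
case: owner => [o|] //; case: hd => [x|] //.
by rewrite size_cat !size_enc.
Qed.

Lemma dord_enc n (v : 'I_n) : dord n (enc (Lb n) v) = Some v.
Proof.
rewrite /dord dec_enc ?valK //.
exact: leq_trans (ltn_ord v) (ltnW (ltn_Lb n)).
Qed.

Lemma decp_enc n (o x : 'I_n) : decp n (enc (Lb n) o ++ enc (Lb n) x) = Some (o, x).
Proof.
rewrite /decp take_size_cat ?size_enc // drop_size_cat ?size_enc //.
by rewrite !dord_enc; case: (enc (Lb n) o).
Qed.

Lemma pre_ext n (d1 d2 : 'I_n -> nat) : d1 =1 d2 -> pre d1 =1 pre d2.
Proof. by move=> e v; apply: eq_bigr => u _. Qed.

Lemma owner_ext n (d1 d2 : 'I_n -> nat) k : d1 =1 d2 -> owner d1 k = owner d2 k.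
Proof. by move=> e; apply: eq_pick => v; rewrite (pre_ext e) e. Qed.

Lemma slot_ext n (d1 d2 : 'I_n -> nat) v r : d1 =1 d2 -> slot d1 v r = slot d2 v r.
Proof. by move=> e; apply: eq_pick => i; rewrite (pre_ext e) e. Qed.

Lemma pre_mono n (d : 'I_n -> nat) (u v : 'I_n) : u < v -> pre d u + d u <= pre d v.
Proof.
move=> uv; rewrite /pre !(big_mkcond (fun w : 'I_n => w < _)) /=.
have -> : \sum_(w < n) (if w < v then d w else 0) =
  \sum_(w < n) ((if w < u then d w else 0) + (if (u <= w) && (w < v) then d w else 0)).
  apply: eq_bigr => w _.
  case: (ltnP w u) => wu /=; first by rewrite (ltn_trans wu uv) addn0.
  by case: (w < v).
rewrite big_split /= leq_add2l (bigD1 u) //= leqnn uv.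
exact: leq_addr.
Qed.

Lemma pre_tot n (d : 'I_n -> nat) (v : 'I_n) : pre d v + d v <= \sum_u d u.
Proof.
rewrite /pre [X in _ <= X](bigD1 v) //= addnC leq_add2l.
rewrite (big_mkcond (fun w : 'I_n => w < v)) (big_mkcond (fun w : 'I_n => w != v)) /=.
apply: leq_sum => w _.
by case: (ltngtP w v) => [h|h|/val_inj ->]; rewrite ?eqxx ?ltnn //; rewrite neq_ltn h ?orbT.
Qed.

Lemma owner_spec n (d : 'I_n -> nat) x k : pre d x <= k < pre d x + d x -> owner d k = Some x.
Proof.
move=> /andP [h1 h2]; rewrite /owner; case: pickP => [o /andP [o1 o2]|H].
  case: (ltngtP o x) => [ox|xo|/val_inj -> //].
    by have := pre_mono d ox; lia.
  by have := pre_mono d xo; lia.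
by move: (H x); rewrite h1 h2.
Qed.

Lemma slot_spec n (d : 'I_n -> nat) x (i : 'I_n) (n0 : 0 < n) :
  i < d x -> slot d x (Ordinal (ltn_pmod (pre d x + i) n0)) = Some i.
Proof.
move=> idx; rewrite /slot; case: pickP => [j /andP [j1 /eqP j2]|H].
  congr Some; apply: val_inj => /=.
  have : (pre d x + j == pre d x + i %[mod n]) by apply/eqP; rewrite j2.
  by rewrite eqn_modDl !modn_small // => /eqP.
by move: (H i); rewrite idx eqxx.
Qed.


Section Run.
Variables (n : nat) (E : rel 'I_n) (a : nat).
Notation R t := (run Alg E a t).
Definition N (v : 'I_n) := [set u | E v u].
Definition d (u : 'I_n) := #|N u|.
Definition H (r u : 'I_n) : option 'I_n :=
  omap (fun i : 'I_n => nth u (enum (N u)) i) (slot d u r).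
Definition bc (t : nat) (r : 'I_n) : option ('I_n * 'I_n) :=
  obind (fun o => omap (fun w => (o, w)) (H r o)) (owner d (r + t * n)).

Lemma R_basic t v : [/\ me (R t v) = v, nb (R t v) = N v & tm (R t v) = t].
Proof.
elim: t v => [|t IH] v //=.
have [e1 e2 e3] := IH v.
rewrite /updf e3; case: t {IH} e1 e2 e3 => [|[|t]] e1 e2 e3 /=; by split.
Qed.

Lemma R_tm t v : tm (R t v) = t. Proof. by case: (R_basic t v). Qed.
Lemma R_nb t v : nb (R t v) = N v. Proof. by case: (R_basic t v). Qed.
Lemma R_me t v : me (R t v) = v. Proof. by case: (R_basic t v). Qed.

Lemma R_succ t v : R t.+1 v = updf a v (R t v) (fun u => msgf a u (R t u) v).
Proof. by []. Qed.

Lemma upd_dg (v : 'I_n) s m : 0 < tm s -> dg (updf a v s m) = dg s.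
Proof. by rewrite /updf; case: (tm s) => [|[|t]]. Qed.

Lemma upd_hd (v : 'I_n) s m : 1 < tm s -> hd (updf a v s m) = hd s.
Proof. by rewrite /updf; case: (tm s) => [|[|t]]. Qed.

Lemma R_dg t v : dg (R t.+1 v) =1 d.
Proof.
elim: t v => [|t IH] v u.
  rewrite R_succ /updf (R_tm 0 v); change (dec (enc (Lb n) (d u)) = d u); rewrite dec_enc //.
  apply: leq_ltn_trans (ltn_Lb n).
  by rewrite /d; apply: leq_trans (max_card _) _; rewrite card_ord.
by rewrite R_succ upd_dg ?R_tm // IH.
Qed.

Lemma R_hd t r : hd (R t.+2 r) =1 H r.
Proof.
elim: t r => [|t IH] r u.
  rewrite R_succ /updf (R_tm 1 r).
  change ((if msgf a u (R 1 u) r is [::] then None else dord n (msgf a u (R 1 u) r)) = H r u).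
  rewrite /msgf (R_tm 1 u) (slot_ext u r (R_dg 0 u)) (R_nb 1 u) /H.
  case: (slot d u r) => [i|] //=.
  by rewrite dord_enc; case: (enc (Lb n) _) (size_enc (Lb n) (nth u (enum (N u)) i)).
by rewrite R_succ upd_hd ?R_tm // IH.
Qed.

Lemma upd_kn (v : 'I_n) s m : tm s <= 1 -> kn (updf a v s m) = kn s.
Proof. by rewrite /updf; case: (tm s) => [|[|t]]. Qed.

Lemma R_kn0 t v x y : t <= 2 -> kn (R t v) x y = false.
Proof.
by case: t => [|[|[|t]]].
Qed.

Lemma R_kn t v x y : kn (R t.+3 v) x y = kn (R t.+2 v) x y || [exists r, bc t r == Some (x, y)].
Proof.
rewrite (R_succ t.+2 v) /updf (R_tm t.+2 v).
change ((kn (R t.+2 v) x y || [exists u, decp n (msgf a u (R t.+2 u) v) == Some (x, y)]) =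
  kn (R t.+2 v) x y || [exists r, bc t r == Some (x, y)]).
congr (_ || _); apply: eq_existsb => r.
rewrite /msgf (R_tm t.+2 r) (owner_ext _ (R_dg t.+1 r)) /bc.
case: owner => [o|] //.
rewrite (R_hd t r o) [in RHS]/=; case: (H r o) => [w|] //.
by rewrite decp_enc.
Qed.

End Run.


Section Main.
Variables (n : nat) (E : rel 'I_n) (a : nat).
Notation R t := (run Alg E a t).

Lemma bc_sound t r x y : bc E t r = Some (x, y) -> E x y.
Proof.
rewrite /bc; case: owner => [o|] //=; rewrite /H /slot.
case: pickP => [i /andP [hi _]|_] //= [<- <-].
have : nth o (enum (N E o)) i \in enum (N E o) by rewrite mem_nth // -cardE.
by rewrite mem_enum inE.
Qed.

Lemma kn_sound t v x y : kn (R t v) x y -> E x y.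
Proof.
elim: t v => [|t IH] v; first by rewrite R_kn0.
case: t IH => [|[|t]] IH; [by rewrite R_kn0 | by rewrite R_kn0 |].
rewrite (R_kn E a t v x y) => /orP [/IH //|/existsP [r /eqP]]; exact: bc_sound.
Qed.

Lemma kn_mono t m v x y : kn (R t v) x y -> kn (R (m + t) v) x y.
Proof.
move=> h; elim: m => // m IH; rewrite addSn.
move: IH; case: (m + t) => [|[|s]] IH; [by rewrite R_kn0 in IH | by rewrite R_kn0 in IH |].
by rewrite (R_kn E a s v x y) IH.
Qed.

Hypothesis irr : forall v, E v v = false.
Hypothesis cov : covered_by_forests E a.
Hypothesis a2 : 2 <= a.

Lemma kn_complete v x y : E x y -> kn (R (3 * a) v) x y.
Proof.
move=> Exy.
have n0 : 0 < n by case: n x {Exy v y} => [[]|].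
have yin : y \in enum (N E x) by rewrite mem_enum inE.
set i := index y (enum (N E x)).
have hi : i < d E x by rewrite /d cardE index_mem.
have hdx : d E x <= n by rewrite /d; apply: leq_trans (max_card _) _; rewrite card_ord.
have hin : i < n := leq_trans hi hdx.
set k := pre (d E) x + i.
pose r := Ordinal (ltn_pmod k n0).
set t := k %/ n.
have hbc : bc E t r = Some (x, y).
  rewrite /bc.
  have -> : r + t * n = k by rewrite /= /t addnC -divn_eq.
  rewrite (owner_spec (x := x)); last by rewrite /k leq_addr /= ltn_add2l.
  rewrite /= /H (@slot_spec _ _ x (Ordinal hin) n0 hi) /=.
  by rewrite nth_index.
have hk : kn (R t.+3 v) x y by rewrite (R_kn E a t v x y); apply/orP; right; apply/existsP; exists r; rewrite hbc.
have ht : t < 2 * a.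
  rewrite /t ltn_divLR //.
  apply: (@leq_trans (pre (d E) x + d E x)); first by rewrite ltn_add2l.
  apply: leq_trans (pre_tot _ _) _.
  exact: edges_bound irr cov.
have -> : 3 * a = (3 * a - t.+3) + t.+3 by lia.
exact: kn_mono.
Qed.

End Main.


Lemma kn_eq n (E : rel 'I_n) a : simple_graph E -> arboricity E a -> 2 <= a ->
  forall v x y, kn (run Alg E a (3 * a) v) x y = E x y.
Proof.
move=> [_ irr] [cov _] a2 v x y; apply/idP/idP.
  exact: kn_sound.
exact: kn_complete.
Qed.

Theorem mainTheorem7 :
  (* Part 1: O(a) rounds, every vertex knows the whole edge set. *)
  (exists (A : CCAlgo) (B C : nat)
          (dec : forall n a, st A n a -> rel 'I_n),
     msg_bounded A B /\
     forall n (E : rel 'I_n) (a : nat),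
       simple_graph E -> arboricity E a -> 2 <= a ->
       forall v x y, dec n a (run A E a (C * a) v) x y = E x y)
  /\
  (* Part 2: every function of the input graph (each vertex outputs its part
     of the common solution) is solvable in O(a) rounds. *)
  (forall (Out : Type) (g : forall n, rel 'I_n -> 'I_n -> Out),
     exists (A : CCAlgo) (B C : nat) (out : forall n a, st A n a -> Out),
       msg_bounded A B /\
       forall n (E : rel 'I_n) (a : nat),
         simple_graph E -> arboricity E a -> 2 <= a ->
         forall v, out n a (run A E a (C * a) v) = g n E v).
Proof.
split.
  exists Alg, 2, 3, (fun n a (s : st Alg n a) => kn s); split; first exact: Alg_bounded.
  exact: kn_eq.
move=> Out g.
exists Alg, 2, 3, (fun n a (s : st Alg n a) => g n (kn s) (me s)); split; first exact: Alg_bounded.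
move=> n E a hs ha a2 v /=.
have -> : kn (run Alg E a (3 * a) v) = E.
  apply: functional_extensionality => x; apply: functional_extensionality => y.
  exact: kn_eq.
by rewrite R_me.
Qed.
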